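(* Let $l\ge2$ and let $H=[h_1,\dots,h_l]\in\mathbb{R}^{5\times l}$ be a structured embedding matrix. For every $1\le k<l$ there is a two-layer ReLU feed-forward network $\mathrm{FFN}:\mathbb{R}^5\to\mathbb{R}^5$ (applied token-wise) with all parameters bounded in absolute value by $O(l\|H\|_\infty)$ such that $$\mathrm{FFN}(h_t)=h_t\ \text{ for } 1\le t\le k,\qquad \mathrm{FFN}(h_t)=(0,0,\mathcal{I}_t^1,\mathcal{I}_t^2,1)^\top\ \text{ for } k<t\le l.$$ Likewise, there is such a network with $\mathrm{FFN}(h_t)=h_t$ for $k\le t\le l$ and $\mathrm{FFN}(h_t)=(0,0,\mathcal{I}_t^1,\mathcal{I}_t^2,1)^\top$ for $t<k$.
   Context: A two-layer ReLU feed-forward network is a map $h\mapsto W_2\sigma(W_1h+b_1)+b_2$ with $\sigma(x)=\max(0,x)$ entrywise. A structured embedding matrix $H\in\mathbb{R}^{5\times l}$ is one whose $t$-th column $h_t$ has entries $(h_t^3,h_t^4)=\mathcal{I}_t=(\cos(\tfrac{t}{l}\tfrac{\pi}{2}),\sin(\tfrac{t}{l}\tfrac{\pi}{2}))$ and $h_t^5=1$; $h_t^1,h_t^2$ are arbitrary. $\|H\|_\infty$ is the maximal absolute entry. *)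

(* Defs.v *)
From HB Require Import structures.
From mathcomp Require Import all_boot all_order all_algebra.
From mathcomp Require Import all_classical all_reals all_analysis.
Set Implicit Arguments. Unset Strict Implicit. Unset Printing Implicit Defensive.
Import Order.TTheory GRing.Theory Num.Theory.
Local Open Scope ring_scope.

(* Rows 0..4 of a 5-vector correspond to entries h^1..h^5 of the paper.
   Column j : 'I_l of H corresponds to token t = j+1 (t ranges over 1..l). *)

Definition relu {R : realType} (x : R) : R := Num.max 0 x.

Definition angle {R : realType} (l t : nat) : R := (t%:R / l%:R) * (pi / 2).
Definition I1 {R : realType} (l t : nat) : R := cos (angle l t).
Definition I2 {R : realType} (l t : nat) : R := sin (angle l t).

Definition structured {R : realType} (l : nat) (H : 'M[R]_(5, l)) : Prop :=
  forall j : 'I_l,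
    H (inord 2) j = I1 l j.+1 /\ H (inord 3) j = I2 l j.+1 /\ H (inord 4) j = 1.

Definition normInf {R : realType} (m n : nat) (A : 'M[R]_(m, n)) : R :=
  \big[Num.max/0]_(i < m) \big[Num.max/0]_(j < n) `|A i j|.

Definition ffn {R : realType} (m : nat) (W1 : 'M[R]_(m, 5)) (b1 : 'cV[R]_m)
  (W2 : 'M[R]_(5, m)) (b2 : 'cV[R]_5) (h : 'cV[R]_5) : 'cV[R]_5 :=
  W2 *m map_mx relu (W1 *m h + b1) + b2.

Definition params_bounded {R : realType} (m : nat) (B : R) (W1 : 'M[R]_(m, 5))
  (b1 : 'cV[R]_m) (W2 : 'M[R]_(5, m)) (b2 : 'cV[R]_5) : Prop :=
  (forall i j, `|W1 i j| <= B) /\ (forall i j, `|b1 i j| <= B) /\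
  (forall i j, `|W2 i j| <= B) /\ (forall i j, `|b2 i j| <= B).

Definition pos_only {R : realType} (l t : nat) : 'cV[R]_5 :=
  \col_(i < 5) nth 0 [:: 0; 0; I1 l t; I2 l t; 1] i.

(* Main.v *)
Require Import Defs.
From HB Require Import structures.
From mathcomp Require Import all_boot all_order all_algebra.
From mathcomp Require Import all_classical all_reals all_analysis.
From mathcomp Require Import ring lra.
Import Order.TTheory GRing.Theory Num.Theory.
Import numFieldNormedType.Exports.
Local Open Scope ring_scope.


Section S1.
Variable R : realType.

Definition rows1 (G2 G3 : R) : seq (seq R) :=
  [:: [:: 1; 0; G2; G3; 0]; [:: -1; 0; G2; G3; 0];
      [:: 0; 1; G2; G3; 0]; [:: 0; -1; G2; G3; 0];
      [:: 0; 0; 1; 0; 0]; [:: 0; 0; -1; 0; 0];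
      [:: 0; 0; 0; 1; 0]; [:: 0; 0; 0; -1; 0];
      [:: 0; 0; 0; 0; 1]; [:: 0; 0; 0; 0; -1]].
Definition rows2 : seq (seq R) :=
  [:: [:: 2^-1; - 2^-1]; [:: 0; 0; 2^-1; - 2^-1]; [:: 0; 0; 0; 0; 1; -1];
      [:: 0; 0; 0; 0; 0; 0; 1; -1]; [:: 0; 0; 0; 0; 0; 0; 0; 0; 1; -1]].
Definition W1g G2 G3 : 'M[R]_(10,5) := \matrix_(p, j) nth 0 (nth [::] (rows1 G2 G3) p) j.
Definition W2g : 'M[R]_(5,10) := \matrix_(p, j) nth 0 (nth [::] rows2 p) j.

Lemma sum5 (F : 'I_5 -> R) : \sum_i F i = F (inord 0) + F (inord 1) + F (inord 2) + F (inord 3) + F (inord 4).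
Proof.
rewrite !big_ord_recl big_ord0 addr0 /= !addrA.
by repeat congr (_ + _); congr F; apply/val_inj; rewrite /= inordK.
Qed.
Lemma sum10 (F : 'I_10 -> R) : \sum_i F i = F (inord 0) + F (inord 1) + F (inord 2) + F (inord 3) + F (inord 4)
  + F (inord 5) + F (inord 6) + F (inord 7) + F (inord 8) + F (inord 9).
Proof.
rewrite !big_ord_recl big_ord0 addr0 /= !addrA.
by repeat congr (_ + _); congr F; apply/val_inj; rewrite /= inordK.
Qed.
Lemma ord5 (i : 'I_5) : i = inord 0 \/ i = inord 1 \/ i = inord 2 \/ i = inord 3 \/ i = inord 4.
Proof.
case: i => [[|[|[|[|[|i]]]]] Hi] //; 
 [left|right;left|right;right;left|right;right;right;left|right;right;right;right]; apply/val_inj; by rewrite /= inordK.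
Qed.

Definition gate (g a : R) := (relu (a + g) - relu (- a + g)) / 2.

Lemma ffn_eval G2 G3 (x : 'cV[R]_5) :
  let g := G2 * x (inord 2) 0 + G3 * x (inord 3) 0 in
  ffn (W1g G2 G3) 0 W2g 0 x = \col_i nth 0 [:: gate g (x (inord 0) 0); gate g (x (inord 1) 0);
     relu (x (inord 2) 0) - relu (- x (inord 2) 0); relu (x (inord 3) 0) - relu (- x (inord 3) 0);
     relu (x (inord 4) 0) - relu (- x (inord 4) 0)] i.
Proof.
move=> g; apply/matrixP => i c; rewrite ord1 /ffn !addr0 !mxE sum10 !mxE.
rewrite !sum5 !mxE.
case: (ord5 i) => [->|[->|[->|[->|->]]]]; rewrite !inordK //= .
all: rewrite /gate /g; rewrite !(mul0r, mul1r, mulr0, add0r, addr0, mulN1r). 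
all: by rewrite ?addrA ?mulNr -?mulrBr ?[_ / 2]mulrC.
Qed.
End S1.
Arguments W1g {R}. Arguments W2g {R}. Arguments gate {R}.


Section S2.
Variable R : realType.

Lemma relu_pos (x : R) : 0 <= x -> relu x = x.
Proof. by move=> h; rewrite /relu maxEle h. Qed.
Lemma relu_neg (x : R) : x <= 0 -> relu x = 0.
Proof. by move=> h; rewrite /relu maxEle; case: ifP => // h'; apply/eqP; rewrite eq_le h h'. Qed.
Lemma relu_id (a : R) : relu a - relu (- a) = a.
Proof.
have [h|h] := lerP 0 a.
  by rewrite relu_pos // relu_neg ?subr0 // oppr_le0.
by rewrite relu_neg ?(ltW h) // relu_pos ?sub0r ?opprK // oppr_ge0 ltW.
Qed.


Lemma gate_pos (B g a : R) : `|a| <= B -> B <= g -> gate g a = a.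
Proof.
rewrite ler_norml => /andP[h1 h2] h3.
rewrite /gate !relu_pos; [|lra|lra]. by field.
Qed.
Lemma gate_neg (B g a : R) : `|a| <= B -> g <= - B -> gate g a = 0.
Proof.
rewrite ler_norml => /andP[h1 h2] h3.
rewrite /gate !relu_neg; [|lra|lra]. by rewrite subrr mul0r.
Qed.

Local Open Scope classical_set_scope.
Lemma sin_lb (x : R) : 0 < x <= 1 -> cos 1 * x <= sin x.
Proof.
case/andP => x0 x1.
have h1 : forall y, y \in `]0, x[%R -> is_derive y 1 (@sin R) (cos y).
  by move=> y _; exact: is_derive_sin.
have h2 : {within `[0, x], continuous (@sin R)}.
  by apply: continuous_subspaceT => y; exact: continuous_sin.
have [c] := MVT x0 h1 h2.
rewrite in_itv /= => /andP[c0 cx]; rewrite sin0 !subr0 => ->.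
rewrite ler_wpM2r ?(ltW x0) //.
have pi2 := @pi_ge2 R.
rewrite leNgt ltr_cos ?in_itv /=; first by rewrite -leNgt (le_trans (ltW cx)).
  by rewrite ler01 /=; lra.
by rewrite (ltW c0) /=; lra.
Qed.

Lemma gap (l : nat) (u : R) : (0 < l)%N -> 1/2 <= u <= l%:R ->
  cos 1 / (2 * l%:R) <= sin (u / l%:R * (pi/2)).
Proof.
move=> l0 /andP[u1 u2].
have lp : 0 < l%:R :> R by rewrite ltr0n.
have p1 := @pihalf_ge1 R. have p2 := @pihalf_lt2 R.
have c1 := @cos1_gt0 R.
set d := u / l%:R * (pi/2).
pose e : R := 1/2 / l%:R * (pi/2).
have l1 : 1 <= l%:R :> R by rewrite ler1n.
have eE : e = (pi/2) / (2 * l%:R).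
  by rewrite /e; field; rewrite lt0r_neq0.
have l2 : 0 < 2 * l%:R :> R by rewrite mulr_gt0.
have e0 : 0 < e by rewrite eE divr_gt0 //; lra.
have ed : e <= d by rewrite /e /d ler_wpM2r ?ler_wpM2r ?invr_ge0 //; lra.
have ul : u / l%:R <= 1 by rewrite ler_pdivrMr // mul1r.
have dp : d <= pi/2 by rewrite /d ler_piMl //; lra.
have e1 : e <= 1 by rewrite eE ler_pdivrMr // mul1r; lra.
have se : sin e <= sin d.
  rewrite leNgt ltr_sin ?in_itv /= -?leNgt //; apply/andP; split; lra.
apply: le_trans se.
have h : cos 1 * e <= sin e by apply: sin_lb; rewrite e0 e1.
apply: le_trans h.
rewrite eE mulrA ler_pM2r ?invr_gt0 //; nra.
Qed.

End S2.


Section S3.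
Variable R : realType.

Lemma gval (K c : R) (l t : nat) :
 -(K * sin (c / l%:R * (pi/2))) * I1 l t + K * cos (c / l%:R * (pi/2)) * I2 l t
   = K * sin ((t%:R - c) / l%:R * (pi/2)).
Proof. rewrite /I1 /I2 /angle mulrBl mulrBl sinB. ring. Qed.

Lemma normInf_ge m n (A : 'M[R]_(m,n)) i j : `|A i j| <= normInf A.
Proof.
rewrite /normInf (bigD1 i) //= le_max; apply/orP; left.
by rewrite (bigD1 j) //= le_max lexx.
Qed.

Lemma nth_bound (s : seq (seq R)) p j (Bd : R) : 0 <= Bd ->
  all (all (fun x => `|x| <= Bd)) s -> `|nth 0 (nth [::] s p) j| <= Bd.
Proof.
move=> B0 /allP hs.
have [ps|ps] := ltnP p (size s); last by rewrite (nth_default _ ps) nth_nil normr0.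
have /allP hr := hs _ (mem_nth [::] ps).
have [js|js] := ltnP j (size (nth [::] s p)); last by rewrite nth_default ?normr0.
exact: hr _ (mem_nth 0 js).
Qed.

End S3.


Section S4.
Variable R : realType.

Lemma construct (l : nat) (H : 'M[R]_(5,l)) (c : R) (b : bool) :
  (2 <= l)%N -> structured H ->
  (forall j : 'I_l, - l%:R <= (if b then -1 else 1) * (j.+1%:R - c) <= l%:R) ->
  exists (W1 : 'M[R]_(10, 5)) (b1 : 'cV[R]_10) (W2 : 'M[R]_(5, 10)) (b2 : 'cV[R]_5),
    params_bounded (2 / cos 1 * l%:R * normInf H) W1 b1 W2 b2 /\
    forall j : 'I_l,
      (1/2 <= (if b then -1 else 1) * (j.+1%:R - c) -> ffn W1 b1 W2 b2 (col j H) = col j H) /\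
      ((if b then -1 else 1) * (j.+1%:R - c) <= - (1/2) -> ffn W1 b1 W2 b2 (col j H) = pos_only l j.+1).
Proof.
move=> l2 Hs hr.
have l0 : (0 < l)%N by apply: leq_trans l2.
have lp : 0 < l%:R :> R by rewrite ltr0n.
have l1 : 1 <= l%:R :> R by rewrite ler1n.
have c1 := @cos1_gt0 R. have c1' := @cos_le1 R 1.
set B := normInf H.
have hB : forall i j, `|H i j| <= B by move=> i j; apply: normInf_ge.
have B1 : 1 <= B.
  have := hB (inord 4) (Ordinal l0); have [_ [_ ->]] := Hs (Ordinal l0).
  by rewrite normr1.
set s : R := if b then -1 else 1.
have s2 : `|s| = 1 by rewrite /s; case: (b); rewrite ?normrN normr1.
pose K0 := 2 * l%:R * B / cos 1.
pose K := s * K0.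
pose phi := c / l%:R * (pi/2).
pose G2 := -(K * sin phi). pose G3 := K * cos phi.
have K0E : K0 = 2 / cos 1 * l%:R * B by rewrite /K0; field; rewrite lt0r_neq0.
have K0g : 2 * l%:R * B <= K0.
  rewrite /K0 ler_pdivlMr //. have : 0 <= 2 * l%:R * B by rewrite !mulr_ge0 //; lra. nra.
have K01 : 1 <= K0 by apply: le_trans K0g; nra.
have K0p : 0 <= K0 by lra.
have KB : K0 * (cos 1 / (2 * l%:R)) = B by rewrite /K0; field; rewrite !lt0r_neq0.
exists (W1g G2 G3), 0, W2g, 0; split.
  rewrite -K0E; have hG2 : `|G2| <= K0.
    rewrite /G2 normrN normrM /K normrM s2 mul1r ger0_norm //.
    by rewrite ler_piMr // sin_max.
  have hG3 : `|G3| <= K0.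
    rewrite /G3 /K normrM normrM s2 mul1r ger0_norm //.
    by rewrite ler_piMr // cos_max.
  have hh : `|2^-1 : R| <= K0 by rewrite ger0_norm ?invr_ge0 //; lra.
  split; [|split; [|split]] => i j; rewrite ?mxE ?normr0 //.
    apply: nth_bound => //=; repeat (apply/andP; split) => //;
    rewrite ?normrN ?normr0 ?normr1 //; first [exact: hG2|exact: hG3|exact: hh|exact: K01].
  apply: nth_bound => //=; repeat (apply/andP; split) => //;
    rewrite ?normrN ?normr0 ?normr1 //; first [exact: hG2|exact: hG3|exact: hh|exact: K01].
move=> j; rewrite ffn_eval.
have Ej : forall k, (col j H) (inord k) 0 = H (inord k) j by move=> k; rewrite !mxE.
rewrite !Ej; have [h2 [h3 h4]] := Hs j.
rewrite h2 h3 /G2 /G3 -/phi gval.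
set t := j.+1%:R.
have [hr1 hr2] : - l%:R <= s * (t - c) /\ s * (t - c) <= l%:R by apply/andP; exact: hr.
split => hu.
  have g1 : B <= K * sin ((t - c) / l%:R * (pi / 2)).
    have -> : K * sin ((t - c) / l%:R * (pi / 2)) = K0 * sin ((s * (t - c)) / l%:R * (pi/2)).
      rewrite /K /s; case: (b); rewrite ?mul1r // !mulN1r !mulNr sinN; ring.
    rewrite -KB ler_wpM2l //; apply: gap => //; lra.
  apply/matrixP => i k; rewrite ord1 !mxE; case: (ord5 i) => [->|[->|[->|[->|->]]]]; rewrite !inordK //=.
  - exact: gate_pos (hB _ _) g1.
  - exact: gate_pos (hB _ _) g1.
  - by rewrite relu_id h2.
  - by rewrite relu_id h3.
  - by rewrite relu_id.
have g1 : K * sin ((t - c) / l%:R * (pi / 2)) <= - B.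
  have -> : K * sin ((t - c) / l%:R * (pi / 2)) = - (K0 * sin ((- (s * (t - c))) / l%:R * (pi/2))).
    rewrite /K /s; case: (b); rewrite ?mul1r ?opprK // ?mulN1r !mulNr ?sinN ?opprK; ring.
  rewrite lerN2 -KB ler_wpM2l //; apply: gap => //; lra.
apply/matrixP => i k; rewrite ord1 !mxE; case: (ord5 i) => [->|[->|[->|[->|->]]]]; rewrite !inordK //=.
- exact: gate_neg (hB _ _) g1.
- exact: gate_neg (hB _ _) g1.
- by rewrite relu_id.
- by rewrite relu_id.
- by rewrite relu_id.
Qed.

End S4.


Theorem lemma4 (R : realType) :
  exists C : R, 0 < C /\
  forall (l : nat) (H : 'M[R]_(5, l)), (2 <= l)%N -> structured H ->
  forall k : nat, (1 <= k)%N -> (k < l)%N ->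
    (exists (m : nat) (W1 : 'M[R]_(m, 5)) (b1 : 'cV[R]_m)
            (W2 : 'M[R]_(5, m)) (b2 : 'cV[R]_5),
       params_bounded (C * l%:R * normInf H) W1 b1 W2 b2 /\
       forall j : 'I_l,
         ((j.+1 <= k)%N -> ffn W1 b1 W2 b2 (col j H) = col j H) /\
         ((k < j.+1)%N -> ffn W1 b1 W2 b2 (col j H) = pos_only l j.+1)) /\
    (exists (m : nat) (W1 : 'M[R]_(m, 5)) (b1 : 'cV[R]_m)
            (W2 : 'M[R]_(5, m)) (b2 : 'cV[R]_5),
       params_bounded (C * l%:R * normInf H) W1 b1 W2 b2 /\
       forall j : 'I_l,
         ((k <= j.+1)%N -> ffn W1 b1 W2 b2 (col j H) = col j H) /\
         ((j.+1 < k)%N -> ffn W1 b1 W2 b2 (col j H) = pos_only l j.+1)).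
Proof.
exists (2 / cos 1); split; first by rewrite divr_gt0 // cos1_gt0.
move=> l H l2 Hs k k1 kl.
have kR : 1 <= k%:R :> R by rewrite ler1n.
have klR : k%:R + 1 <= l%:R :> R by rewrite natr1 ler_nat.
have tR : forall j : 'I_l, (1 <= j.+1%:R :> R) && (j.+1%:R <= l%:R :> R).
  by move=> j; rewrite ler1n ler_nat ltn_ord.
split.
  have [|W1 [b1 [W2 [b2 [hb hf]]]]] := @construct R l H (k%:R + 1/2) true l2 Hs.
    by move=> j; have /andP[t1 t2] := tR j; apply/andP; split; lra.
  exists 10%N, W1, b1, W2, b2; split => // j.
  have /andP[t1 t2] := tR j; have [f1 f2] := hf j.
  split => h.
    apply: f1; move: h; rewrite -(ler_nat R) => h; lra.
  apply: f2; move: h; rewrite -(ler_nat R) -natr1 => h; lra.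
have [|W1 [b1 [W2 [b2 [hb hf]]]]] := @construct R l H (k%:R - 1/2) false l2 Hs.
  by move=> j; have /andP[t1 t2] := tR j; apply/andP; split; lra.
exists 10%N, W1, b1, W2, b2; split => // j.
have /andP[t1 t2] := tR j; have [f1 f2] := hf j.
split => h.
  apply: f1; move: h; rewrite -(ler_nat R) => h; lra.
apply: f2; move: h; rewrite -(ler_nat R) -natr1 => h; lra.
Qed.
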